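(* Let $q$ be a prime power and $d\ge 2q-1$ an integer. Let $R_d$ be the set of homogeneous polynomials of degree $d$ in $\mathbb{F}_q[x,y,z]$ (including $0$), and for $f\in R_d$ let $\#C_f(\mathbb{F}_q)$ denote the number of points of $\mathbb{P}^2(\mathbb{F}_q)$ at which $f$ vanishes. Let $B_1,\dots,B_{q^2+q+1}$ be independent identically distributed Bernoulli random variables taking the value $1$ with probability $1/q$. Then for every integer $n$, $$\frac{\#\{f\in R_d:\#C_f(\mathbb{F}_q)=n\}}{\#R_d}=\mathrm{Prob}(B_1+\dots+B_{q^2+q+1}=n).$$ *)

(* Defs.v *)
From HB Require Import structures.
From mathcomp Require Import all_boot all_order all_algebra all_field.
From mathcomp Require Import mpoly.
Set Implicit Arguments. Unset Strict Implicit. Unset Printing Implicit Defensive.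
Import Order.TTheory GRing.Theory Num.Theory.
Local Open Scope ring_scope.

(* R_d = dhomog 3 F d : homogeneous polynomials of degree d (including 0)
   in F[x,y,z] = {mpoly F[3]}.  Over a finite field this is a finite set;
   we equip it with a finType structure via the (injective) map sending a
   polynomial to its coefficients on the monomials of degree <= d.        *)
Section DhomogFinite.
Variables (F : finFieldType) (d : nat).

Definition dh_coefs (p : dhomog 3 F d) : {ffun 'X_{1..3 < d.+1} -> F} :=
  [ffun m => (val p)@_(bmnm m)].

Definition dh_of (c : {ffun 'X_{1..3 < d.+1} -> F}) : dhomog 3 F d :=
  [ 'dhomog_d (\sum_(m : 'X_{1..3 < d.+1} | mdeg m == d) c m *: 'X_[bmnm m]) ].

Lemma dh_coefsK : cancel dh_coefs dh_of.
Proof.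
move=> p; apply/val_inj; rewrite /dh_of /indhomog.
have hp : val p \is [in F[3], d.-homog] by exact: dhomog_is_dhomog.
set s := (\sum_(m : 'X_{1..3 < d.+1} | mdeg m == d) _).
suff -> : s = val p by rewrite insubdK.
apply/mpolyP => k; rewrite /s raddf_sum /=.
under eq_bigr => m _ do rewrite ffunE mcoeffZ mcoeffX.
case: (boolP (mdeg k == d)) => [/eqP hk | hk].
  have kb : (mdeg k < d.+1)%N by rewrite hk.
  rewrite (bigD1 (BMultinom kb)) /= ?hk ?eqxx // mulr1 big1 ?addr0 // => m.
  case/andP=> _ hm; case: eqP => [e|]; last by rewrite mulr0.
  by case/eqP: hm; apply/val_inj; rewrite /= e.
rewrite big1; first by rewrite (dhomog_nemf_coeff hp hk).
move=> m /eqP hm; case: eqP => [e|]; last by rewrite mulr0.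
by move: hk; rewrite -e hm eqxx.
Qed.

End DhomogFinite.

Definition homog_polys (F : finFieldType) (d : nat) : Type := dhomog 3 F d.

HB.instance Definition _ (F : finFieldType) (d : nat) :=
  Finite.copy (homog_polys F d) (can_type (@dh_coefsK F d)).

(* The projective plane P^2(F): its points are the lines (1-dim subspaces)
   of F^3, a point being the set { a v | a in F } for some nonzero v.   *)
Definition proj_line (F : finFieldType) (v : {ffun 'I_3 -> F}) :
  {set {ffun 'I_3 -> F}} := [set [ffun i => a * v i] | a : F].

Definition P2 (F : finFieldType) : {set {set {ffun 'I_3 -> F}}} :=
  [set proj_line v | v in [set v : {ffun 'I_3 -> F} | v != 0]].

Definition nb_points (F : finFieldType) (d : nat) (f : homog_polys F d) : nat :=
  #|[set L in P2 F | [forall w in L, (mpoly_of_dhomog f).@[w] == 0]]|.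

(* Prob(B_1 + ... + B_N = n) for i.i.d. Bernoulli(p) variables B_i,
   computed on the finite product probability space {0,1}^N. *)
Definition bernoulli_sum_prob (N : nat) (p : rat) (n : int) : rat :=
  \sum_(b : {ffun 'I_N -> bool} | (\sum_(i < N) (b i : nat))%:Z == n)
     \prod_(i < N) (if b i then p else 1 - p).

(* Main.v *)
Require Import Defs.
From HB Require Import structures.
From mathcomp Require Import all_boot all_order all_algebra all_field.
From mathcomp Require Import mpoly.
From mathcomp Require Import zify ring lra.
Import Order.TTheory GRing.Theory Num.Theory.
Set Implicit Arguments. Unset Strict Implicit. Unset Printing Implicit Defensive.
Local Open Scope ring_scope.

Lemma cardF_gt1 (F : finFieldType) : (1 < #|F|)%N.
Proof. by apply/card_gt1P; exists 0, 1; rewrite !inE eq_sym oner_neq0. Qed.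

Lemma fexp_card1 (F : finFieldType) (x : F) : x != 0 -> x ^+ (#|F|.-1) = 1.
Proof.
move=> x0; apply: (mulfI x0); rewrite mulr1 -exprS prednK ?expf_card //.
by apply: ltn_trans (cardF_gt1 F).
Qed.

Definition scv (F : finFieldType) (a : F) (v : {ffun 'I_3 -> F}) : {ffun 'I_3 -> F} :=
  [ffun i => a * v i].

Lemma mem_proj_line (F : finFieldType) (v w : {ffun 'I_3 -> F}) :
  reflect (exists a, w = scv a v) (w \in proj_line v).
Proof. by apply: (iffP imsetP) => [[a _ ->]|[a ->]]; exists a. Qed.

Lemma scvA (F : finFieldType) a b (v : {ffun 'I_3 -> F}) : scv a (scv b v) = scv (a * b) v.
Proof. by apply/ffunP => i; rewrite !ffunE mulrA. Qed.

Lemma scv1 (F : finFieldType) (v : {ffun 'I_3 -> F}) : scv 1 v = v.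
Proof. by apply/ffunP => i; rewrite !ffunE mul1r. Qed.

Lemma scv_eq0 (F : finFieldType) a (v : {ffun 'I_3 -> F}) :
  (scv a v == 0) = (a == 0) || (v == 0).
Proof.
apply/eqP/orP => [h|[/eqP->|/eqP->]].
- case: (eqVneq a 0) => [_|a0]; [by left|right]; apply/eqP/ffunP => i.
  by have := congr1 (fun f : {ffun _ -> _} => f i) h; rewrite !ffunE => /eqP; rewrite mulf_eq0 (negPf a0) => /eqP.
- by apply/ffunP => i; rewrite !ffunE mul0r.
- by apply/ffunP => i; rewrite !ffunE mulr0.
Qed.

Lemma proj_line_scv (F : finFieldType) a (v : {ffun 'I_3 -> F}) :
  a != 0 -> proj_line (scv a v) = proj_line v.
Proof.
move=> a0; apply/setP => w; apply/mem_proj_line/mem_proj_line => [[b ->]|[b ->]].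
  by exists (b * a); rewrite scvA.
by exists (b / a); rewrite scvA mulfVK.
Qed.

Lemma proj_line_self (F : finFieldType) (v : {ffun 'I_3 -> F}) : v \in proj_line v.
Proof. by apply/mem_proj_line; exists 1; rewrite scv1. Qed.

Lemma proj_line_eqP (F : finFieldType) (u v : {ffun 'I_3 -> F}) :
  u != 0 -> proj_line u = proj_line v -> exists2 a, a != 0 & u = scv a v.
Proof.
move=> u0 e; have : u \in proj_line v by rewrite -e proj_line_self.
case/mem_proj_line => a ua; exists a => //.
by apply: contra u0 => a0; rewrite ua scv_eq0 a0.
Qed.

Lemma meval_scv (F : finFieldType) (d : nat) (f : dhomog 3 F d) a v :
  (mpoly_of_dhomog f).@[scv a v] = a ^+ d * (mpoly_of_dhomog f).@[v].
Proof.
rewrite !mevalE mulr_sumr; apply: eq_big_seq => m mm.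
have hd := dhomog_mf (dhomog_is_dhomog f) mm.
rewrite mulrCA; congr (_ * _).
under eq_bigr => i _ do rewrite ffunE exprMn.
by rewrite big_split /= prodrXr -mdegE hd.
Qed.

Lemma scv_inj (F : finFieldType) (u : {ffun 'I_3 -> F}) : u != 0 -> injective (fun a => scv a u).
Proof.
move=> u0 a b e.
have [i ui] : exists i, u i != 0.
  apply/existsP; apply: contraR u0 => /existsPn h; apply/eqP/ffunP => i.
  by rewrite ffunE; apply/eqP; have := h i; rewrite negbK.
have := congr1 (fun f : {ffun _ -> _} => f i) e; rewrite /= !ffunE.
exact: mulIf.
Qed.

Lemma card_line_nz (F : finFieldType) (u : {ffun 'I_3 -> F}) : u != 0 ->
  #|[set v : {ffun 'I_3 -> F} | (v != 0) && (proj_line v == proj_line u)]| = #|F|.-1.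
Proof.
move=> u0; rewrite -(cardC1 (0 : F)) -(card_imset _ (scv_inj u0)).
apply: eq_card => v; rewrite !inE; apply/andP/imsetP => [[v0 /eqP e]|[a]].
  by have [a a0 ->] := proj_line_eqP v0 e; exists a.
rewrite inE => a0 ->; rewrite scv_eq0 negb_or a0 u0 proj_line_scv //.
Qed.

Lemma card_P2 (F : finFieldType) : #|P2 F| = (#|F| ^ 2 + #|F| + 1)%N.
Proof.
have q1 := cardF_gt1 F.
have h : (#|P2 F| * #|F|.-1 = #|F| ^ 3 - 1)%N.
  have -> : (#|F| ^ 3 - 1 = \sum_(v : {ffun 'I_3 -> F} | (v != 0)%R) 1)%N.
    rewrite sum1_card; transitivity #|predC1 (0 : {ffun 'I_3 -> F})|; last by apply: eq_card.
    by rewrite cardC1 card_ffun card_ord subn1.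
  rewrite (partition_big (@proj_line F) (fun L => L \in P2 F)) /=; last first.
    by move=> v v0; apply/imsetP; exists v; rewrite ?inE.
  rewrite -sum_nat_const; apply: eq_bigr => L /imsetP [u]; rewrite inE => u0 ->.
  by rewrite sum1_card -(card_line_nz u0); apply: eq_card => v; rewrite !inE.
have e : (#|F| ^ 3 - 1 = #|F|.-1 * (#|F| ^ 2 + #|F| + 1))%N.
  case: #|F| q1 => // q _; rewrite !expnS expn0 !muln1; nia.
apply/eqP; rewrite -(@eqn_pmul2r #|F|.-1) ?h ?e ?[(_ * _.-1)%N]mulnC //.
by rewrite -ltnS prednK // ltnW.
Qed.

Lemma fexp_ne0 (F : finFieldType) (x : F) :
  (1 - x ^+ (#|F|.-1) != 0) = (x == 0).
Proof.
have q1 : (0 < #|F|.-1)%N by rewrite -ltnS prednK ?cardF_gt1 // ltnW ?cardF_gt1.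
case: (eqVneq x 0) => [->|x0]; first by rewrite expr0n (gtn_eqF q1) subr0 oner_neq0.
by rewrite fexp_card1 // subrr eqxx.
Qed.

Lemma exists_G (F : finFieldType) (d : nat) (hd : (2 * #|F| - 1 <= d)%N)
  (v : {ffun 'I_3 -> F}) : v != 0 ->
  exists g : dhomog 3 F d, forall w : {ffun 'I_3 -> F},
    ((mpoly_of_dhomog g).@[w] != 0) = (w != 0) && (proj_line w == proj_line v).
Proof.
move=> v0.
have [k vk] : exists k, v k != 0.
  apply/existsP; apply: contraR v0 => /existsPn h; apply/eqP/ffunP => i.
  by rewrite ffunE; apply/eqP; have := h i; rewrite negbK.
set q1 := #|F|.-1.
have q1p : (0 < q1)%N by rewrite -ltnS prednK ?cardF_gt1 // ltnW ?cardF_gt1.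
set e := (d - 2 * q1)%N.
have ep : (0 < e)%N.
  have := cardF_gt1 F; rewrite /e /q1; case: #|F| hd => // q; rewrite /=; lia.
pose X : {mpoly F[3]} := 'X_k.
pose m (t : 'I_3) : {mpoly F[3]} := v k *: 'X_t - v t *: 'X_k.
pose j : 'I_3 := lift k ord0.
pose l : 'I_3 := lift k ord_max.
pose P := X ^+ e * ((X ^+ q1 - m j ^+ q1) * (X ^+ q1 - m l ^+ q1)).
have X1 : forall t : 'I_3, ('X_t : {mpoly F[3]}) \is 1.-homog for mdeg.
  by move=> t; rewrite dhomogX; apply/eqP; exact: mdeg1.
have m1 : forall t, m t \is 1.-homog for mdeg.
  by move=> t; rewrite rpredB ?dhomogZ ?X1.
have fac : forall t, X ^+ q1 - m t ^+ q1 \is q1.-homog for mdeg.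
  move=> t; rewrite rpredB //; [move: (dhomogMn q1 (X1 k)) | move: (dhomogMn q1 (m1 t))]; by rewrite mul1n.
have hP : P \is d.-homog for mdeg.
  have -> : d = (1 * e + (q1 + q1))%N by rewrite mul1n /e addnn -mul2n subnK //; lia.
  by apply: dhomogM; [exact: (dhomogMn e (X1 k)) | apply: dhomogM].
exists (DHomog hP) => w /=.
have ev : P.@[w] = w k ^+ e * ((w k ^+ q1 - (v k * w j - v j * w k) ^+ q1) *
                                (w k ^+ q1 - (v k * w l - v l * w k) ^+ q1)).
  by rewrite /P /m /X !(mevalM, mevalB, rmorphXn) /= !(mevalB, mevalZ, mevalXU).
rewrite ev; case: (eqVneq (w k) 0) => [wk0|wk0].
  rewrite wk0 expr0n (gtn_eqF ep) mul0r eqxx /=; apply/esym/negP => /andP [w0 /eqP el].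
  have [b b0 wb] := proj_line_eqP w0 el.
  by move: wk0; rewrite wb ffunE => /eqP; rewrite mulf_eq0 (negPf b0) (negPf vk).
rewrite fexp_card1 // mulf_eq0 negb_or expf_eq0 (negPf wk0) andbF /=.
rewrite mulf_eq0 negb_or !fexp_ne0 (_ : (w != 0) = true); last first.
  by apply: contra wk0 => /eqP ->; rewrite ffunE.
rewrite /=; apply/andP/eqP => [[/eqP hj /eqP hl]|el].
  have hall : forall t, v k * w t = v t * w k.
    move=> t; case: (unliftP k t) => [s ->|->]; last by rewrite mulrC.
    case: s => [[|[|//]]] Hs.
      have -> : Ordinal Hs = ord0 by apply: val_inj.
      by apply/eqP; rewrite -subr_eq0; apply/eqP; exact: hj.
    have -> : Ordinal Hs = ord_max by apply: val_inj.
    by apply/eqP; rewrite -subr_eq0; apply/eqP; exact: hl.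
  rewrite -(@proj_line_scv _ (w k / v k) v); last by rewrite mulf_neq0 ?invr_eq0.
  congr proj_line; apply/ffunP => t; rewrite ffunE.
  by rewrite mulrAC [w k * _]mulrC -hall mulrC mulKf.
have w0 : w != 0 by apply: contra wk0 => /eqP ->; rewrite ffunE.
have [b b0 wb] := proj_line_eqP w0 el.
by rewrite wb !ffunE; split; apply/eqP; ring.
Qed.

Lemma foldr_prod (T:finType) (f : T -> nat) : foldr muln 1%N [seq f x | x : T] = (\prod_x f x)%N.
Proof. by rewrite foldrE big_image; apply: eq_bigl => x. Qed.

Lemma card_fiber (T J : finType) (A : {pred T}) (p : T -> J) :
  #|A| = (\sum_j #|[set x in A | p x == j]|)%N.
Proof.
rewrite -sum1_card (partition_big p predT) //; apply: eq_bigr => j _.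
by rewrite -sum1_card; apply: eq_bigl => x; rewrite !inE.
Qed.

Definition rep (F : finFieldType) (L : {set {ffun 'I_3 -> F}}) : {ffun 'I_3 -> F} :=
  odflt 0 [pick v : {ffun 'I_3 -> F} | (v != 0) && (proj_line v == L)].

Lemma rep_spec (F : finFieldType) L : L \in P2 F -> rep L != 0 /\ proj_line (rep L) = L.
Proof.
rewrite /rep; case: pickP => [v /andP [v0 /eqP e]|h] //=.
case/imsetP => u; rewrite inE => u0 eL.
by have := h u; rewrite u0 eL eqxx.
Qed.

Definition evf (F : finFieldType) (d : nat) (f : homog_polys F d) :
  {ffun 'I_#|P2 F| -> F} := [ffun i => (mpoly_of_dhomog f).@[rep (enum_val i)]].

Lemma nb_points_ev (F : finFieldType) (d : nat) (f : homog_polys F d) :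
  nb_points f = #|[set i | evf f i == 0]|.
Proof.
rewrite /nb_points -!sum1_card.
rewrite (eq_bigl (fun L => (L \in P2 F) && ((mpoly_of_dhomog f).@[rep L] == 0))); last first.
  move=> L; rewrite inE; case LP: (L \in P2 F) => //=.
  have [r0 rL] := rep_spec LP.
  apply/forall_inP/eqP => [h|h w].
    by apply/eqP/h; have := proj_line_self (rep L); rewrite rL.
  rewrite -rL => /mem_proj_line [a ->]; by rewrite meval_scv h mulr0.
rewrite big_enum_val_cond /=; apply: eq_bigl => i; by rewrite inE ffunE.
Qed.

Lemma evfD (F : finFieldType) (d : nat) (f g : homog_polys F d) :
  evf (f + g : dhomog 3 F d) = evf f + evf g.
Proof. by apply/ffunP => i; rewrite !ffunE !raddfD. Qed.

Lemma evfZ (F : finFieldType) (d : nat) (c : F) (f : homog_polys F d) :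
  forall j, evf (c *: f : dhomog 3 F d) j = c * evf f j.
Proof. by move=> j; rewrite !ffunE linearZ /=. Qed.

Lemma evf_sum (F : finFieldType) (d : nat) (I : finType) (fs : I -> homog_polys F d) :
  evf (\sum_i (fs i : dhomog 3 F d)) = \sum_i evf (fs i).
Proof.
apply/ffunP => j; rewrite !ffunE raddf_sum /=.
rewrite (big_morph (fun x : {mpoly F[3]} => x.@[rep (enum_val j)]) (@mevalD _ _ _) (@meval0 _ _ _)).
rewrite (big_morph (fun x : {ffun 'I_#|P2 F| -> F} => x j) (id1 := 0) (op1 := +%R)); first last.
- by rewrite ffunE.
- by move=> x y; rewrite ffunE.
by apply: eq_bigr => i _; rewrite ffunE.
Qed.

Lemma evf_surj (F : finFieldType) (d : nat) (hd : (2 * #|F| - 1 <= d)%N)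
  (phi : {ffun 'I_#|P2 F| -> F}) : exists g : homog_polys F d, evf g = phi.
Proof.
pose Gp (i : 'I_#|P2 F|) (g : homog_polys F d) := [forall w : {ffun 'I_3 -> F},
    ((mpoly_of_dhomog g).@[w] != 0) == (w != 0) && (proj_line w == proj_line (rep (enum_val i)))].
pose G i := odflt 0 [pick g | Gp i g].
have GP : forall i (w : {ffun 'I_3 -> F}), ((mpoly_of_dhomog (G i)).@[w] != 0) =
    (w != 0) && (proj_line w == proj_line (rep (enum_val i))).
  move=> i w; rewrite /G; case: pickP => [g /forallP h /=|h].
    exact: (eqP (h w)).
  have [r0 _] := rep_spec (enum_valP i).
  have [g hg] := exists_G hd r0.
  by have := h g; rewrite /Gp; move/negbT/forallPn => [w0]; rewrite hg eqxx.
have Gij : forall i j, (evf (G i) j != 0) = (i == j).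
  move=> i j; rewrite ffunE GP.
  have [rj0 rjL] := rep_spec (enum_valP j); have [_ riL] := rep_spec (enum_valP i).
  by rewrite rj0 rjL riL /= (inj_eq enum_val_inj) eq_sym.
exists (\sum_i (phi i / evf (G i) i) *: (G i : dhomog 3 F d)).
rewrite evf_sum; apply/ffunP => j.
rewrite (big_morph (fun x : {ffun 'I_#|P2 F| -> F} => x j) (id1 := 0) (op1 := +%R)); first last.
- by rewrite ffunE.
- by move=> x y; rewrite ffunE.
rewrite (bigD1 j) //= big1 ?addr0.
  by rewrite evfZ divfK // Gij.
move=> i ij; rewrite evfZ; apply/eqP; rewrite mulf_eq0; apply/orP; right.
by apply/negPn; rewrite Gij.
Qed.

Lemma fiber_card (F : finFieldType) (d : nat) (hd : (2 * #|F| - 1 <= d)%N)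
  (phi : {ffun 'I_#|P2 F| -> F}) :
  #|[set f : homog_polys F d | evf f == phi]| = #|[set f : homog_polys F d | evf f == 0]|.
Proof.
have [g hg] := evf_surj hd phi.
have inj : injective (fun f : homog_polys F d => ((f : dhomog 3 F d) + g : homog_polys F d)).
  exact: addIr.
rewrite -(card_preimset _ inj).
apply: eq_card => f; rewrite !inE evfD hg.
by rewrite -{2}[phi]add0r (inj_eq (@addIr _ phi)).
Qed.

Lemma card_pattern (F : finFieldType) (N : nat) (b : {ffun 'I_N -> bool}) :
  #|[set phi : {ffun 'I_N -> F} | [ffun i => phi i == 0] == b]| =
  (\prod_i (if b i then 1 else #|F|.-1))%N.
Proof.
pose Fm (i : 'I_N) := if b i then [pred x : F | x == 0] else [pred x : F | x != 0].
rewrite -foldr_prod.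
have -> : [seq (if b x then 1 else #|F|.-1)%N | x : 'I_N] = [seq #|Fm x| | x : 'I_N].
  apply: eq_map => i; rewrite /Fm; case: (b i).
    by rewrite -(card1 (0:F)); apply: eq_card => x; rewrite !inE.
  by rewrite -(cardC1 (0:F)); apply: eq_card => x; rewrite !inE.
rewrite -(card_family Fm); apply: eq_card => phi; rewrite inE.
apply/eqP/familyP => [e i|h]. rewrite /Fm -e ffunE; by case: eqP => h; rewrite inE ?h //; apply/eqP.
apply/ffunP => i; rewrite ffunE; have := h i; rewrite /Fm; case: (b i).
  by rewrite inE.
by rewrite inE => /negbTE.
Qed.

Definition Kf (F : finFieldType) (d : nat) := #|[set f : homog_polys F d | evf f == 0]|.

Lemma card_total (F : finFieldType) (d : nat) (hd : (2 * #|F| - 1 <= d)%N) :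
  #|{: homog_polys F d}| = (#|F| ^ #|P2 F| * Kf F d)%N.
Proof.
rewrite (card_fiber _ (@evf F d)).
rewrite (eq_bigr (fun _ => Kf F d)); last first.
  move=> phi _; rewrite /Kf -(fiber_card hd phi); apply: eq_card => f; by rewrite !inE.
by rewrite sum_nat_const card_ffun card_ord.
Qed.

Lemma card_pat (F : finFieldType) (d : nat) (hd : (2 * #|F| - 1 <= d)%N)
  (b : {ffun 'I_#|P2 F| -> bool}) :
  #|[set f : homog_polys F d | [ffun i => evf f i == 0] == b]| =
  ((\prod_i (if b i then 1 else #|F|.-1)) * Kf F d)%N.
Proof.
rewrite (card_fiber _ (@evf F d)).
rewrite (eq_bigr (fun phi : {ffun 'I_#|P2 F| -> F} => if [ffun i => phi i == 0] == b then Kf F d else 0%N)); last first.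
  move=> phi _; case: ifP => c.
    rewrite /Kf -(fiber_card hd phi); apply: eq_card => f; rewrite !inE.
    by case: (eqVneq (evf f) phi) => [->|_]; rewrite ?c ?andbF.
  apply/eqP; rewrite cards_eq0; apply/eqP/setP => f; rewrite !inE.
  by case: (eqVneq (evf f) phi) => [->|_]; rewrite ?andbT ?andbF ?c.
rewrite -big_mkcond /= sum_nat_const -(card_pattern F b); congr (_ * _)%N.
by apply: eq_card => phi; rewrite !inE.
Qed.

Lemma Kf_gt0 (F : finFieldType) (d : nat) : (0 < Kf F d)%N.
Proof.
apply/card_gt0P; exists 0; rewrite inE; apply/eqP/ffunP => i.
by rewrite !ffunE raddf0.
Qed.

Lemma nb_points_sum (F : finFieldType) (d : nat) (f : homog_polys F d) :
  nb_points f = (\sum_i ([ffun i => (evf f i == 0)%R] i : nat))%N.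
Proof.
rewrite nb_points_ev -sum1_card big_mkcond /=; apply: eq_bigr => i _.
by rewrite inE !ffunE; case: (_.@[_] == 0).
Qed.

Theorem proposition3p3 (F : finFieldType) (d : nat)
  (hd : (2 * #|F| - 1 <= d)%N) (n : int) :
  (#|[set f : homog_polys F d | (nb_points f)%:Z == n]|%:R
     / #|{: homog_polys F d}|%:R : rat)
  = bernoulli_sum_prob (#|F| ^ 2 + #|F| + 1) (#|F|%:R)^-1 n.
Proof.
rewrite -card_P2 /bernoulli_sum_prob.
pose pat (f : homog_polys F d) := [ffun i => evf f i == 0].
have -> : #|[set f : homog_polys F d | (nb_points f)%:Z == n]| =
    (\sum_(b : {ffun 'I_#|P2 F| -> bool} | (\sum_(i < #|P2 F|) (b i : nat))%:Z == n)
       #|[set f : homog_polys F d | pat f == b]|)%N.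
  rewrite (card_fiber _ pat) [RHS]big_mkcond /=; apply: eq_bigr => b _.
  case: ifP => c.
    apply: eq_card => f; rewrite !inE nb_points_sum -/(pat f).
    by case: (eqVneq (pat f) b) => [->|_]; rewrite ?andbT ?andbF ?c.
  apply/eqP; rewrite cards_eq0; apply/eqP/setP => f; rewrite !inE nb_points_sum -/(pat f).
  by case: (eqVneq (pat f) b) => [->|_]; rewrite ?andbT ?andbF ?c.
rewrite natr_sum mulr_suml; apply: eq_bigr => b _.
rewrite card_pat // card_total // !natrM natr_prod natrX mulrC.
have K0 : (Kf F d)%:R != 0 :> rat by rewrite pnatr_eq0 -lt0n Kf_gt0.
have q0 : #|F|%:R != 0 :> rat by rewrite pnatr_eq0 -lt0n ltnW ?cardF_gt1.
rewrite invfM mulrACA mulVf // mulr1 -exprVn.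
have -> : (#|F|%:R^-1 : rat) ^+ #|P2 F| = \prod_(i < #|P2 F|) #|F|%:R^-1.
  by rewrite prodr_const card_ord.
rewrite -big_split /=; apply: eq_bigr => i _.
case: (b i); first by rewrite mulr1.
have hq : (#|F|%:R : rat) = (#|F|.-1)%:R + 1 by rewrite natr1 prednK // ltnW // cardF_gt1.
move: q0; rewrite hq; move: (_.-1)%:R => x x0.
by field.
Qed.
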